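(* Let $X',X''$ be a disjoint cover of an index set $X$, $\Pi:=\Pi X$, $\Pi':=\Pi X'$, $\Pi'':=\Pi X''$, and let $\preceq\subseteq(\Pi\times\Pi)\cup(\Pi'\times\Pi')\cup(\Pi''\times\Pi'')$ be a (generalized) Hamming relation with associated $\mu$. For $\Sigma\subseteq\Pi$ let $\Sigma':=\Sigma\upharpoonright X'$ and $\Sigma'':=\Sigma\upharpoonright X''$. (1) If $\preceq$ is smooth, then for every $\Sigma\subseteq\Pi$ (not necessarily of the form $\Sigma'\times\Sigma''$): if $\mu(\Sigma')\times\mu(\Sigma'')\subseteq\Sigma$ then $\mu(\Sigma)=\mu(\Sigma')\times\mu(\Sigma'')$. (2) For every $\Sigma\subseteq\Pi$ with $\Sigma=\Sigma'\times\Sigma''$ we have $\mu(\Sigma)=\mu(\Sigma')\times\mu(\Sigma'')$ (condition ($\mu$*1)); consequently, for the size notion ''$B\subseteq A$ is big iff $\mu(A)\subseteq B\subseteq A$'', condition (S*1) holds: for $\Sigma'\subseteq\Pi'$, $\Sigma''\subseteq\Pi''$, $\Delta\subseteq\Sigma'\times\Sigma''$, $\Delta$ is big in $\Sigma'\times\Sigma''$ iff there is $\Gamma'\times\Gamma''\subseteq\Delta$ with $\Gamma'$ big in $\Sigma'$ and $\Gamma''$ big in $\Sigma''$.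
   Context: $\Pi X$ is the product of the value sets over the indices in $X$. Elements $\sigma\in\Pi$ are written $\sigma=\sigma'\circ\sigma''$ (concatenation) with $\sigma'=\sigma\upharpoonright X'$, $\sigma''=\sigma\upharpoonright X''$. $\preceq$ is a (generalized) Hamming relation iff $\preceq$ is reflexive and for all $\sigma,\tau\in\Pi$: $\sigma\preceq\tau\iff(\sigma'\preceq\tau'$ and $\sigma''\preceq\tau'')$. $x\prec y$ means $x\preceq y$ and $x\neq y$. For a set $A$ (subset of $\Pi$, $\Pi'$ or $\Pi''$), $\mu(A):=\{x\in A:\neg\exists x'\in A.\,x'\prec x\}$. $\preceq$ is smooth iff for every such $A$ and every $x\in A-\mu(A)$ there is $x'\in\mu(A)$ with $x'\prec x$. *)

(* Defs.v *)
Set Implicit Arguments.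

(* Index set X with value sets V x; X' = {x | Xp x}, X'' = {x | ~ Xp x}
   (a disjoint cover of X). *)
Definition Pi (X : Type) (V : X -> Type) : Type := forall x : X, V x.
Definition Pi1 (X : Type) (V : X -> Type) (Xp : X -> Prop) : Type :=
  forall x : {x : X | Xp x}, V (proj1_sig x).
Definition Pi2 (X : Type) (V : X -> Type) (Xp : X -> Prop) : Type :=
  forall x : {x : X | ~ Xp x}, V (proj1_sig x).

Definition res1 (X : Type) (V : X -> Type) (Xp : X -> Prop) (s : Pi V) : Pi1 V Xp :=
  fun x => s (proj1_sig x).
Definition res2 (X : Type) (V : X -> Type) (Xp : X -> Prop) (s : Pi V) : Pi2 V Xp :=
  fun x => s (proj1_sig x).

Definition resS1 (X : Type) (V : X -> Type) (Xp : X -> Prop) (S : Pi V -> Prop) : Pi1 V Xp -> Prop :=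
  fun t => exists s, S s /\ @res1 X V Xp s = t.
Definition resS2 (X : Type) (V : X -> Type) (Xp : X -> Prop) (S : Pi V -> Prop) : Pi2 V Xp -> Prop :=
  fun t => exists s, S s /\ @res2 X V Xp s = t.

(* the product Sigma' x Sigma'' as a subset of Pi: all sigma = sigma' o sigma''
   with sigma' in Sigma', sigma'' in Sigma'' *)
Definition prodS (X : Type) (V : X -> Type) (Xp : X -> Prop) (S1 : Pi1 V Xp -> Prop) (S2 : Pi2 V Xp -> Prop) : Pi V -> Prop :=
  fun s => S1 (@res1 X V Xp s) /\ S2 (@res2 X V Xp s).

Definition subset T (A B : T -> Prop) : Prop := forall x, A x -> B x.
Definition seteq T (A B : T -> Prop) : Prop := forall x, A x <-> B x.

Definition strict T (le : T -> T -> Prop) (x y : T) : Prop := le x y /\ x <> y.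

Definition mu T (le : T -> T -> Prop) (A : T -> Prop) : T -> Prop :=
  fun x => A x /\ ~ (exists x', A x' /\ strict le x' x).

Definition smooth_on T (le : T -> T -> Prop) : Prop :=
  forall (A : T -> Prop) x, A x -> ~ mu le A x ->
    exists x', mu le A x' /\ strict le x' x.

Definition reflexive_on T (le : T -> T -> Prop) : Prop := forall x, le x x.

(* The relation <= on (Pi x Pi) u (Pi' x Pi') u (Pi'' x Pi'') is given by its
   three components le, le1, le2. *)
Definition hamming (X : Type) (V : X -> Type) (Xp : X -> Prop) (le : Pi V -> Pi V -> Prop)
  (le1 : Pi1 V Xp -> Pi1 V Xp -> Prop) (le2 : Pi2 V Xp -> Pi2 V Xp -> Prop) : Prop :=
  reflexive_on le /\ reflexive_on le1 /\ reflexive_on le2 /\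
  forall s t : Pi V,
    le s t <-> (le1 (@res1 X V Xp s) (@res1 X V Xp t) /\ le2 (@res2 X V Xp s) (@res2 X V Xp t)).

(* The relation (as a whole) is smooth iff each component is smooth. *)
Definition smooth3 (X : Type) (V : X -> Type) (Xp : X -> Prop) (le : Pi V -> Pi V -> Prop)
  (le1 : Pi1 V Xp -> Pi1 V Xp -> Prop) (le2 : Pi2 V Xp -> Pi2 V Xp -> Prop) : Prop :=
  @smooth_on (Pi V) le /\ @smooth_on (Pi1 V Xp) le1 /\ @smooth_on (Pi2 V Xp) le2.

Definition big T (le : T -> T -> Prop) (B A : T -> Prop) : Prop :=
  subset (mu le A) B /\ subset B A.

(* Main.v *)
Require Import Defs.
From Stdlib Require Import Classical ClassicalEpsilon FunctionalExtensionality ProofIrrelevance.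

Definition glue {X : Type} {V : X -> Type} {Xp : X -> Prop}
  (s1 : Pi1 V Xp) (s2 : Pi2 V Xp) : Pi V :=
  fun x => match excluded_middle_informative (Xp x) with
           | left h => s1 (exist _ x h)
           | right h => s2 (exist _ x h) end.

Lemma res1_glue (X : Type) (V : X -> Type) (Xp : X -> Prop) s1 s2 :
  @res1 X V Xp (glue s1 s2) = s1.
Proof.
  apply functional_extensionality_dep; intros [x p]; unfold res1, glue; simpl.
  destruct (excluded_middle_informative (Xp x)) as [h|h].
  - rewrite (proof_irrelevance _ h p); reflexivity.
  - contradiction.
Qed.

Lemma res2_glue (X : Type) (V : X -> Type) (Xp : X -> Prop) s1 s2 :
  @res2 X V Xp (glue s1 s2) = s2.
Proof.
  apply functional_extensionality_dep; intros [x p]; unfold res2, glue; simpl.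
  destruct (excluded_middle_informative (Xp x)) as [h|h].
  - contradiction.
  - rewrite (proof_irrelevance _ h p); reflexivity.
Qed.

Lemma eq_res (X : Type) (V : X -> Type) (Xp : X -> Prop) (s t : Pi V) :
  @res1 X V Xp s = @res1 X V Xp t -> @res2 X V Xp s = @res2 X V Xp t -> s = t.
Proof.
  intros H1 H2; apply functional_extensionality_dep; intro x.
  destruct (classic (Xp x)) as [h|h].
  - exact (f_equal (fun f => f (exist _ x h)) H1).
  - exact (f_equal (fun f => f (exist (fun x => ~ Xp x) x h)) H2).
Qed.

Lemma mu_prod (X : Type) (V : X -> Type) (Xp : X -> Prop)
  (le : Pi V -> Pi V -> Prop)
  (le1 : Pi1 V Xp -> Pi1 V Xp -> Prop) (le2 : Pi2 V Xp -> Pi2 V Xp -> Prop) :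
  hamming le le1 le2 -> forall S1 S2,
  seteq (mu le (prodS S1 S2)) (prodS (mu le1 S1) (mu le2 S2)).
Proof.
  intros [Hr [Hr1 [Hr2 Hh]]] S1 S2 s; split.
  - intros [[HS1 HS2] Hm]. split; split; auto.
    + intros [t' [Ht' [Hle Hne]]]. apply Hm.
      exists (glue t' (res2 Xp s)). split.
      * unfold prodS; rewrite res1_glue, res2_glue; auto.
      * split.
        -- apply Hh; rewrite res1_glue, res2_glue; auto.
        -- intro E; apply Hne; rewrite <- E, res1_glue; reflexivity.
    + intros [t' [Ht' [Hle Hne]]]. apply Hm.
      exists (glue (res1 Xp s) t'). split.
      * unfold prodS; rewrite res1_glue, res2_glue; auto.
      * split.
        -- apply Hh; rewrite res1_glue, res2_glue; auto.
        -- intro E; apply Hne; rewrite <- E, res2_glue; reflexivity.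
  - intros [[HS1 Hm1] [HS2 Hm2]]. split. { split; auto. }
    intros [t [[Ht1 Ht2] [Hle Hne]]]. apply Hh in Hle as [Hle1 Hle2].
    apply Hne, eq_res with (Xp := Xp).
    + apply NNPP; intro N; apply Hm1; exists (res1 Xp t); split; auto; split; auto.
    + apply NNPP; intro N; apply Hm2; exists (res2 Xp t); split; auto; split; auto.
Qed.

Lemma mu_seteq T (le : T -> T -> Prop) A B : seteq A B -> seteq (mu le A) (mu le B).
Proof.
  intros H x; unfold mu; split; intros [Ha Hn]; split; try apply H; auto;
  intros [y [Hy Hs]]; apply Hn; exists y; split; auto; apply H; auto.
Qed.

Theorem fact4p9 (X : Type) (V : X -> Type) (Xp : X -> Prop)
  (le : Pi V -> Pi V -> Prop)
  (le1 : Pi1 V Xp -> Pi1 V Xp -> Prop) (le2 : Pi2 V Xp -> Pi2 V Xp -> Prop) :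
  hamming le le1 le2 ->
  (* (1) *)
  (smooth3 le le1 le2 ->
   forall S : Pi V -> Prop,
     subset (prodS (mu le1 (resS1 (Xp:=Xp) S)) (mu le2 (resS2 (Xp:=Xp) S))) S ->
     seteq (mu le S) (prodS (mu le1 (resS1 (Xp:=Xp) S)) (mu le2 (resS2 (Xp:=Xp) S)))) /\
  (* (2) (mu*1) *)
  (forall S : Pi V -> Prop,
     seteq S (prodS (resS1 (Xp:=Xp) S) (resS2 (Xp:=Xp) S)) ->
     seteq (mu le S) (prodS (mu le1 (resS1 (Xp:=Xp) S)) (mu le2 (resS2 (Xp:=Xp) S)))) /\
  (* (2) consequently (S*1) *)
  (forall (S1 : Pi1 V Xp -> Prop) (S2 : Pi2 V Xp -> Prop) (D : Pi V -> Prop),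
     subset D (prodS S1 S2) ->
     (big le D (prodS S1 S2) <->
      exists (G1 : Pi1 V Xp -> Prop) (G2 : Pi2 V Xp -> Prop),
        subset (prodS G1 G2) D /\ big le1 G1 S1 /\ big le2 G2 S2)).
Proof.
  intro HH. pose proof (@mu_prod X V Xp le le1 le2 HH) as MP.
  destruct HH as [Hr [Hr1 [Hr2 Hh]]].
  split; [|split].
  - intros [Hs [Hs1 Hs2]] S Hsub s; split.
    + intros [HS Hm].
      assert (A1 : resS1 S (res1 Xp s)) by (exists s; auto).
      assert (A2 : resS2 S (res2 Xp s)) by (exists s; auto).
      assert (E1 : exists t1, mu le1 (resS1 S) t1 /\ le1 t1 (res1 Xp s)).
      { destruct (classic (mu le1 (resS1 S) (res1 Xp s))) as [M|M].
        - exists (res1 Xp s); auto.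
        - destruct (Hs1 _ _ A1 M) as [t [Ht [Hl _]]]; eauto. }
      assert (E2 : exists t2, mu le2 (resS2 S) t2 /\ le2 t2 (res2 Xp s)).
      { destruct (classic (mu le2 (resS2 S) (res2 Xp s))) as [M|M].
        - exists (res2 Xp s); auto.
        - destruct (Hs2 _ _ A2 M) as [t [Ht [Hl _]]]; eauto. }
      destruct E1 as [t1 [Mt1 Lt1]], E2 as [t2 [Mt2 Lt2]].
      assert (Hg : S (glue t1 t2)).
      { apply Hsub; unfold prodS; rewrite res1_glue, res2_glue; auto. }
      assert (Hlg : le (glue t1 t2) s).
      { apply Hh; rewrite res1_glue, res2_glue; auto. }
      assert (Eg : glue t1 t2 = s).
      { apply NNPP; intro N; apply Hm; exists (glue t1 t2); split; auto; split; auto. }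
      assert (Et1 : t1 = res1 Xp s) by (rewrite <- Eg, res1_glue; reflexivity).
      assert (Et2 : t2 = res2 Xp s) by (rewrite <- Eg, res2_glue; reflexivity).
      split; [rewrite <- Et1 | rewrite <- Et2]; auto.
    + intros Hp. split. { apply Hsub; auto. }
      destruct Hp as [[HS1 Hm1] [HS2 Hm2]].
      intros [t [Ht [Hle Hne]]]. apply Hh in Hle as [Hle1 Hle2].
      apply Hne, eq_res with (Xp := Xp).
      * apply NNPP; intro N; apply Hm1; exists (res1 Xp t); split.
        -- exists t; auto.
        -- split; auto.
      * apply NNPP; intro N; apply Hm2; exists (res2 Xp t); split.
        -- exists t; auto.
        -- split; auto.
  - intros S HS s. split.
    + intro H. apply (proj1 (MP _ _ s)). apply (proj1 (@mu_seteq _ le _ _ HS s)); auto.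
    + intro H. apply (proj2 (@mu_seteq _ le _ _ HS s)). apply (proj2 (MP _ _ s)); auto.
  - intros S1 S2 D HD. split.
    + intros [Hmu Hsub]. exists (mu le1 S1), (mu le2 S2). split; [|split].
      * intros s Hs; apply Hmu, MP; auto.
      * split; [intros x H; exact H | intros x [H _]; exact H].
      * split; [intros x H; exact H | intros x [H _]; exact H].
    + intros [G1 [G2 [HG [[B1 C1] [B2 C2]]]]]. split; auto.
      intros s Hs. apply MP in Hs as [H1 H2]. apply HG; split; auto.
Qed.
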